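(* For every integer $n$, \[ \sum_{k=1}^n(-1)^{k-1}F_k^{\,4}=\frac{(-1)^{n-1}}{3}F_nF_{n+1}F_{n-2}F_{n+3}\,. \]
   Context: $F_i$ denotes the Fibonacci numbers, defined for all $i\in\mathbb{Z}$ by $F_i=F_{i-1}+F_{i-2}$, $F_0=0$, $F_1=1$; equivalently $F_{-i}=(-1)^{i-1}F_i$. Summation convention for an arbitrary integer upper limit: $\sum_{k=a}^{a-1} f(k)=0$, and for $n<a-1$, $\sum_{k=a}^{n} f(k) = -\sum_{k=n+1}^{a-1} f(k)$. *)

(* Defs.v *)
From mathcomp Require Import all_boot all_order all_algebra.
Set Implicit Arguments. Unset Strict Implicit. Unset Printing Implicit Defensive.
Import Order.TTheory GRing.Theory Num.Theory.
Local Open Scope ring_scope.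

Fixpoint fibn (i : nat) : nat :=
  match i with
  | 0%N => 0%N
  | 1%N => 1%N
  | (j.+1 as k).+1 => (fibn k + fibn j)%N
  end.

(* Fibonacci numbers on Z: F_{-i} = (-1)^(i-1) F_i. *)
Definition fibz (i : int) : int :=
  match i with
  | Posz m => (fibn m)%:Z
  | Negz m => (-1) ^+ m * (fibn m.+1)%:Z   (* Negz m = -(m+1), (-1)^((m+1)-1) *)
  end.

(* Sum over integer range with the convention:
   sum_{k=a}^{n} f k = f a + ... + f n           if n >= a - 1 (empty if n = a-1),
                     = - sum_{k=n+1}^{a-1} f k   if n < a - 1. *)
Definition isum (R : zmodType) (a n : int) (f : int -> R) : R :=
  if a - 1 <= n then \sum_(i < absz (n - a + 1)%R) f (a + i%:Z)
  else - \sum_(i < absz (a - 1 - n)%R) f (n + 1 + i%:Z).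

Example fibz_neg : [seq fibz (- (i%:Z)) | i <- iota 0 7] = [:: 0; 1; -1; 2; -3; 5; -8].
Proof. by []. Qed.

(* Main.v *)
Require Import Defs.
From mathcomp Require Import all_boot all_order all_algebra.
From mathcomp Require Import zify ring lra.
Import Order.TTheory GRing.Theory Num.Theory.
Local Open Scope ring_scope.

Definition Fq (k : int) : rat := (fibz k)%:~R.

Lemma fibz_rec (k : int) : fibz (k + 2) = fibz (k + 1) + fibz k.
Proof.
case: k => [m|m].
  have -> : Posz m + 2 = Posz m.+2 by rewrite -PoszD addn2.
  have -> : Posz m + 1 = Posz m.+1 by rewrite -PoszD addn1.
  by rewrite /= PoszD.
case: m => [|[|j]]; first by []; first by [].
have -> : Negz j.+2 + 2 = Negz j by rewrite !NegzE; lia.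
have -> : Negz j.+2 + 1 = Negz j.+1 by rewrite !NegzE; lia.
rewrite /= !exprS !PoszD; ring.
Qed.

Lemma frq (a b c : int) : b = a + 1 -> c = a + 2 -> Fq c = Fq b + Fq a.
Proof. by move=> -> ->; rewrite /Fq fibz_rec rmorphD. Qed.

Definition G (n : int) : rat := (-1 : rat) ^ (n - 1) / 3%:R *
    ((fibz n)%:~R * (fibz (n + 1))%:~R * (fibz (n - 2))%:~R * (fibz (n + 3))%:~R).
Definition f (k : int) : rat := (-1 : rat) ^ (k - 1) * ((fibz k)%:~R : rat) ^+ 4.

Lemma Gstep (n : int) : G n = G (n - 1) + f n.
Proof.
rewrite /G /f.
have -> : n - 1 + 1 = n by lia.
have -> : n - 1 - 2 = n - 3 by lia.
have -> : n - 1 + 3 = n + 2 by lia.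
have hs : (-1 : rat) ^ (n - 1 - 1) = - (-1) ^ (n - 1).
  rewrite expfzDr ?oppr_eq0 ?oner_eq0 //.
  rewrite (_ : (-1 : rat) ^ (-1) = -1); first by rewrite mulrN1.
  by rewrite exprN1 invrN1.
rewrite hs.
have e1 := frq n (n+1) (n+2) erefl erefl.
have e2 := frq (n+1) (n+2) (n+3) (ltac:(lia)) (ltac:(lia)).
have e3 := frq (n-1) n (n+1) (ltac:(lia)) (ltac:(lia)).
have e4 := frq (n-2) (n-1) n (ltac:(lia)) (ltac:(lia)).
have e5 := frq (n-3) (n-2) (n-1) (ltac:(lia)) (ltac:(lia)).
rewrite /Fq in e1 e2 e3 e4 e5.
set x := (fibz n)%:~R : rat in e1 e2 e3 e4 e5 *.
set y := (fibz (n+1))%:~R : rat in e1 e2 e3 e4 e5 *.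
clearbody x y.
have h1 : (fibz (n-1))%:~R = y - x :> rat by lra.
have h2 : (fibz (n-2))%:~R = 2 * x - y :> rat by lra.
have h5 : (fibz (n-3))%:~R = 2 * y - 3 * x :> rat by lra.
rewrite e2 e1 h1 h2 h5.
by field.
Qed.

Lemma isum_pos (m : nat) : isum 1 (Posz m) f = \sum_(i < m) f (1 + i%:Z).
Proof.
rewrite /isum.
have -> : (1 - 1 <= Posz m) = true by rewrite subrr.
by have -> : absz (Posz m - 1 + 1) = m by rewrite subrK.
Qed.

Lemma isum_neg (m : nat) : isum 1 (Negz m) f = - \sum_(i < m.+1) f (Negz m + 1 + i%:Z).
Proof.
rewrite /isum subrr.
have -> : (0 <= Negz m) = false by [].
by have -> : absz (0 - Negz m) = m.+1 by rewrite sub0r NegzE opprK.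
Qed.

Theorem corollary3 (n : int) :
  isum 1 n (fun k : int => (-1 : rat) ^ (k - 1) * ((fibz k)%:~R : rat) ^+ 4) =
  (-1 : rat) ^ (n - 1) / 3%:R *
    ((fibz n)%:~R * (fibz (n + 1))%:~R * (fibz (n - 2))%:~R * (fibz (n + 3))%:~R).
Proof.
change (isum 1 n f = G n).
have G0 : G 0 = 0 by rewrite /G mul0r mulr0.
case: n => m.
  elim: m => [|m IH]; first by rewrite isum_pos big_ord0 G0.
  rewrite isum_pos big_ord_recr /= -isum_pos IH (Gstep (Posz m.+1)).
  have -> : Posz m.+1 - 1 = Posz m by rewrite -addn1 PoszD addrK.
  by rewrite -PoszD add1n.
elim: m => [|m IH].
  have h := Gstep 0.
  rewrite G0 (_ : (0:int) - 1 = Negz 0) // in h.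
  rewrite isum_neg big_ord1 (_ : Negz 0 + 1 + (@nat_of_ord 1 ord0)%:Z = 0) //.
rewrite isum_neg big_ord_recl.
have -> : Negz m.+1 + 1 + (@nat_of_ord m.+2 ord0)%:Z = Negz m by rewrite !NegzE /=; lia.
have E : forall i : 'I_m.+1, Negz m.+1 + 1 + (lift ord0 i)%:Z = Negz m + 1 + i%:Z.
  by move=> i; rewrite /= /bump /= !NegzE; lia.
under eq_bigr => i _ do rewrite E.
rewrite opprD -isum_neg IH (Gstep (Negz m)).
have -> : Negz m - 1 = Negz m.+1 by rewrite !NegzE; lia.
lra.
Qed.
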